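(* Let $A$ be an abelian group of order $n$. The number of quadruples $(C,Z,S',S'')$ such that $C,Z$ are subgroups of $A$ with $A=C\times Z$, $C$ is cyclic of order $t\geq 4$, $Z$ is an elementary abelian $2$-group, $S'\in\{C,\emptyset,\{1\},C\setminus\{1\}\}$ and $S''\subseteq Z$, is at most $2^{n/4+2\log_2 n-1}$.
   Context: $A=C\times Z$ means $A$ is the internal direct product of its subgroups $C$ and $Z$; the trivial group counts as an elementary abelian $2$-group. *)

(* Defs.v *)
From mathcomp Require Import all_boot all_fingroup all_solvable.
From Stdlib Require Import Reals.
Set Implicit Arguments. Unset Strict Implicit. Unset Printing Implicit Defensive.
Open Scope group_scope.

Definition quads (gT : finGroupType) (A : {set gT})
  : {set {set gT} * {set gT} * {set gT} * {set gT}} :=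
  [set q : {set gT} * {set gT} * {set gT} * {set gT} |
     let: (C, Z, S1, S2) := q in
     [&& group_set C, group_set Z, C \x Z == A,
         cyclic C, 4 <= #|C|, 2.-abelem Z,
         S1 \in [:: C; set0; [set 1]; C :\ 1] & S2 \subset Z]].

(* Main.v *)
Require Import Defs.
From mathcomp Require Import all_boot all_fingroup all_solvable all_algebra all_character.
Set Implicit Arguments. Unset Strict Implicit. Unset Printing Implicit Defensive.
Open Scope group_scope.

Section S.
Variable gT : finGroupType.
Implicit Types dummy : unit.

Lemma inv2_uniq (C : {group gT}) c c' : cyclic C -> c \in C -> c' \in C ->
  c ^+ 2 = 1 -> c' ^+ 2 = 1 -> c != 1 -> c' != 1 -> c = c'.
Proof.
move=> cC Cc Cc' c2 c'2 n1 n1'.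
have o2 (x : gT) : x ^+ 2 = 1 -> x != 1 -> #[x] = 2%N.
  move=> x2 xn; have : (#[x] %| 2)%N by rewrite order_dvdn x2.
  have : #[x] != 1%N by rewrite order_eq1.
  have := order_gt0 x; case: #[x] => [|[|[|k]]] //.
have := eq_subG_cyclic cC (H := <[c]>%G) (K := <[c']>%G).
rewrite /= !cycle_subG Cc Cc' /= -!orderE (o2 _ c2 n1) (o2 _ c'2 n1') eqxx => /(_ isT isT) /eqP E.
have : c' \in <[c]> by rewrite E cycle_id.
case/cyclePmin => i; rewrite (o2 _ c2 n1); case: i => [|[|i]] // _ E'.
by rewrite E' expg0 eqxx in n1'.
Qed.

Lemma dprod_dec (A C Z : {group gT}) x : C \x Z = A -> x \in A ->
  exists c z, [/\ c \in C, z \in Z, commute c z & x = c * z].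
Proof.
move=> D xA; have [_ eA cZC _] := dprodP D.
move: xA; rewrite -eA => /mulsgP[c z Cc Zz ->]; exists c, z; split=> //.
apply: commute_sym; exact: (centP (subsetP cZC z Zz)) c Cc.
Qed.

Lemma sq1 (c z : gT) : commute c z -> (c * z) ^+ 2 = 1 -> z ^+ 2 = 1 -> c ^+ 2 = 1.
Proof. by move=> cz; rewrite expgMn // => + z2; rewrite z2 mulg1. Qed.

Lemma comp_inj (A C Z Z' Z0 : {group gT}) : cyclic C -> C \x Z = A -> C \x Z' = A ->
  C \x Z0 = A -> 2.-abelem Z -> 2.-abelem Z' -> 2.-abelem Z0 ->
  Z' :&: Z0 \subset Z -> Z :&: Z0 \subset Z' -> Z \subset Z'.
Proof.
move=> cC DZ DZ' DZ0 /(abelemP (isT : prime 2)) [_ eZ] /(abelemP (isT : prime 2)) [_ eZ']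
  /(abelemP (isT : prime 2)) [_ eZ0] s1 s2.
apply/subsetP => z Zz.
have zA : z \in A by have [_ <- _ _] := dprodP DZ; by rewrite -[z]mul1g mem_mulg.
have [c [z0 [Cc Z0z0 cz ez]]] := dprod_dec DZ0 zA.
have c2 : c ^+ 2 = 1 by apply: (sq1 cz); [rewrite -ez eZ | rewrite eZ0].
have [c1 | cn1] := eqVneq c 1.
  by apply: (subsetP s2); rewrite inE Zz /= ez c1 mul1g.
have z0A : z0 \in A by have [_ <- _ _] := dprodP DZ0; by rewrite -[z0]mul1g mem_mulg.
have [c' [z' [Cc' Zz' cz' ez']]] := dprod_dec DZ' z0A.
have c'2 : c' ^+ 2 = 1 by apply: (sq1 cz'); [rewrite -ez' eZ0 | rewrite eZ'].
have [c'1 | c'n1] := eqVneq c' 1.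
  have z0Z : z0 \in Z by apply: (subsetP s1); rewrite inE Z0z0 ez' c'1 mul1g Zz'.
  have : c \in C :&: Z by rewrite inE Cc /= (_ : c = z * z0^-1) ?groupM ?groupV // ez mulgK.
  by have [_ _ _ ->] := dprodP DZ; rewrite inE (negPf cn1).
have ecc := inv2_uniq cC Cc Cc' c2 c'2 cn1 c'n1.
by rewrite ez ez' -ecc mulgA -expg2 c2 mul1g.
Qed.

Lemma ker_exists (A C Z Z0 : {group gT}) : cyclic C -> C \x Z = A ->
  C \x Z0 = A -> 2.-abelem Z -> 2.-abelem Z0 ->
  exists i : Iirr Z0, cfker ('chi_i)%R = Z :&: Z0.
Proof.
move=> cC DZ DZ0 abZ abZ0.
have [aZ eZ] := (abelemP (isT : prime 2)) abZ.
have [aZ0 eZ0] := (abelemP (isT : prime 2)) abZ0.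
set K := (Z :&: Z0)%G.
have sKZ0 : K \subset Z0 by exact: subsetIr.
have nsK : K <| Z0 by rewrite -sub_abelian_normal.
have nK : Z0 \subset 'N(K) by case/andP: nsK.
have [sZ0Z | nsZ0Z] := boolP (Z0 \subset Z).
  exists (0 : Iirr Z0)%R; rewrite irr0 cfker_cfun1; apply/eqP; rewrite eqEsubset subsetIr subsetI sZ0Z subxx //.
have [x Z0x nZx] := subsetPn nsZ0Z.
have half y : y \in Z0 -> y \notin Z -> x^-1 * y \in Z.
  move=> Z0y nZy.
  have dec w : w \in Z0 -> w \notin Z -> exists2 c, (c \in C) && (c != 1) & c^-1 * w \in Z.
    move=> Z0w nZw.
    have wA : w \in A by have [_ <- _ _] := dprodP DZ0; rewrite -[w]mul1g mem_mulg.
    have [c [z [Cc Zz cz ew]]] := dprod_dec DZ wA.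
    exists c; last by rewrite ew mulKg.
    rewrite Cc /=; apply: contraNneq nZw => c1; by rewrite ew c1 mul1g.
  have [c /andP[Cc cn1] Zc] := dec y Z0y nZy.
  have [c' /andP[Cc' c'n1] Zc'] := dec x Z0x nZx.
  have c2 (d w : gT) : d \in C -> d^-1 * w \in Z -> w \in Z0 -> d ^+ 2 = 1.
    move=> Cd Zw Z0w.
    have wA : w \in A by have [_ <- _ _] := dprodP DZ0; rewrite -[w]mul1g mem_mulg.
    have [_ _ cZC _] := dprodP DZ.
    have cd : commute d (d^-1 * w).
      apply: commute_sym; exact: (centP (subsetP cZC _ Zw)) d Cd.
    by apply: (sq1 cd); [rewrite mulKVg eZ0 | rewrite eZ].
  have ecc := inv2_uniq cC Cc Cc' (c2 _ _ Cc Zc Z0y) (c2 _ _ Cc' Zc' Z0x) cn1 c'n1.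
  have -> : x^-1 * y = (c'^-1 * x)^-1 * (c^-1 * y) by rewrite ecc invMg invgK -mulgA mulKVg.
  by rewrite groupM ?groupV.
have nKx : x \notin K by rewrite inE negb_and nZx.
have eZ0K : Z0 :=: K :|: x *: K.
  apply/eqP; rewrite eqEsubset subUset sKZ0 /=; apply/andP; split.
    apply/subsetP => y Z0y; rewrite inE; have [Zy | nZy] := boolP (y \in Z).
      by rewrite inE Zy Z0y.
    apply/orP; right; apply/lcosetP; exists (x^-1 * y); last by rewrite mulKVg.
    by rewrite inE half // groupM ?groupV.
  by apply/subsetP => y /lcosetP[k Kk ->]; rewrite groupM // (subsetP sKZ0).
have dis : K :&: x *: K = set0.
  apply/setP => y; rewrite [y \in set0]inE; apply/negP => /setIP[Ky /lcosetP[k Kk ey]].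
  have ex : x = y * k^-1 by rewrite ey mulgK.
  by move: nKx; rewrite ex groupM ?groupV.
have cZ0 : #|Z0| = (2 * #|K|)%N by rewrite eZ0K cardsU dis cards0 card_lcoset subn0 addnn mul2n.
have oQ : #|Z0 / K| = 2%N.
  have := Lagrange sKZ0; rewrite cZ0 -card_quotient // mulnC => /eqP.
  by rewrite eqn_pmul2r ?cardG_gt0 // => /eqP.
have ntQ : (Z0 / K)%G :!=: 1 by rewrite -cardG_gt1 oQ.
set j : Iirr (Z0 / K) := inord 1.
have jn0 : j != 0%R := Iirr1_neq0 ntQ.
have kj : cfker ('chi_j)%R = 1.
  have : Z0 / K :&: cfker ('chi_j)%R = 1.
    by apply: prime_TIg; rewrite ?oQ // subGcfker.
  by move/setIidPr: (cfker_sub ('chi_j)%R) => ->.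
exists (mod_Iirr j); rewrite mod_IirrE //.
apply/eqP; rewrite eqEsubset cfker_mod // andbT.
rewrite -quotient_sub1; last by apply: subset_trans (cfker_sub _) nK.
by rewrite (quotient_cfker_mod set0) // kj.
Qed.

Definition isPair (A : {set gT}) (p : {set gT} * {set gT}) : bool :=
  let: (C, Z) := p in
  [&& group_set C, group_set Z, C \x Z == A, cyclic C, 4 <= #|C| & 2.-abelem Z].

Lemma quads_le (A : {set gT}) :
  #|quads A| <= \sum_(p | isPair A p) 4 * 2 ^ #|p.2|.
Proof.
rewrite -sum1_card (partition_big (fun q => (q.1.1.1, q.1.1.2)) (isPair A)); last first.
  move=> [[[C Z] S1] S2]; rewrite inE /= => /and5P[-> -> -> -> /and4P[-> -> _ _]] //.
apply: leq_sum => [[C Z]] pCZ.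
rewrite sum1dep_card.
set S1s := [set S | S \in [:: C; set0; [set 1]; C :\ 1]].
apply: (@leq_trans #|setX S1s (powerset Z)|).
  rewrite -(card_in_imset (f := fun q : {set gT} * {set gT} * {set gT} * {set gT} => (q.1.2, q.2))).
    apply: subset_leq_card; apply/subsetP => y /imsetP[[[[C' Z'] S1] S2]].
    rewrite inE /= => /andP[qq /eqP[eC eZ]] ->; subst C' Z'.
    move: qq; rewrite inE /= => /and5P[_ _ _ _ /and4P[_ _ s1 s2]].
    by rewrite inE /= inE s1 powersetE s2.
  move=> [[[C1 Z1] S1] S2] [[[C2 Z2] S1'] S2']; rewrite !inE /=.
  by move=> /andP[_ /eqP[-> ->]] /andP[_ /eqP[-> ->]] [-> ->].
rewrite cardsX card_powerset /= leq_mul2r; apply/orP; right.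
by rewrite /S1s cardsE (leq_trans (card_size _)).
Qed.

Lemma comp_count (A : {group gT}) (C : {set gT}) :
  4 * #|[set Z | isPair A (C, Z)]| <= #|A|.
Proof.
set S := [set Z | isPair A (C, Z)].
have [-> | [Z0 Z0S]] := set_0Vmem S; first by rewrite cards0.
move: (Z0S); rewrite inE /= => /and5P[gC gZ0 /eqP D0 cC /andP[c4 ab0]].
pose CG := Group gC; pose Z0G := Group gZ0.
have D0' : CG \x Z0G = A by [].
have ab0' : 2.-abelem Z0G by [].
have aZ0 : abelian Z0G by case/(abelemP (isT : prime 2)): ab0'.
have le : #|S| <= #|Z0|.
  rewrite -[#|Z0|]/(#|Z0G|) -card_Iirr_abelian //.
  rewrite -(card_in_imset (f := fun Z => Z :&: Z0)); last first.
    move=> Z Z'; rewrite !inE /= => /and5P[_ gZ /eqP D cC' /andP[_ ab]]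
      /and5P[_ gZ' /eqP D' _ /andP[_ ab']] E.
    pose ZG := Group gZ; pose ZG' := Group gZ'.
    have h1 := @comp_inj A CG ZG ZG' Z0G cC D D' D0' ab ab' ab0'.
    have h2 := @comp_inj A CG ZG' ZG Z0G cC D' D D0' ab' ab ab0'.
    have e1 : ZG' :&: Z0G \subset ZG by rewrite /= -E subsetIl.
    have e2 : ZG :&: Z0G \subset ZG' by rewrite /= E subsetIl.
    by apply/eqP; rewrite eqEsubset (h1 e1 e2) (h2 e2 e1).
  have hh := leq_imset_card (fun i : Iirr Z0G => cfker ('chi_i)%R) [set: Iirr Z0G].
  rewrite cardsT in hh; apply: (leq_trans _ hh).
  apply: subset_leq_card; apply/subsetP => K /imsetP[Z]; rewrite inE /= =>
    /and5P[_ gZ /eqP D _ /andP[_ ab]] ->.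
  have [i ei] := @ker_exists A CG (Group gZ) Z0G cC D D0' ab ab0'.
  by apply/imsetP; exists i; rewrite ?inE // ei.
apply: (leq_trans (leq_mul (leqnn 4) le)).
by rewrite -(dprod_card D0') leq_mul2r c4 orbT.
Qed.

Definition PC (A : {set gT}) :=
  [set C : {set gT} | [&& group_set C, cyclic C, 4 <= #|C| & C \subset A]].

Definition gen (C : {set gT}) : gT := odflt 1 [pick x | C == <[x]>].

Lemma genP C : cyclic C -> C = <[gen C]>.
Proof.
case/cyclicP => x ex; rewrite /gen; case: pickP => [y /eqP //|/(_ x)].
by rewrite ex eqxx.
Qed.

Lemma gen_count (A : {group gT}) : 2 * #|PC A| <= #|A|.
Proof.
set T := [set gen C | C in PC A]; set T' := [set x^-1 | x in T].
have inPC C : C \in PC A -> [/\ C = <[gen C]>, 4 <= #|C| & C \subset A].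
  by rewrite inE => /and4P[_ cC c4 sCA]; split => //; apply: genP.
have cT : #|T| = #|PC A|.
  apply: card_in_imset => C C' /inPC[e _ _] /inPC[e' _ _] eg.
  by rewrite e e' eg.
have cT' : #|T'| = #|T| by apply: card_imset; apply: invg_inj.
have dis : T :&: T' = set0.
  apply/setP => y; rewrite [y \in set0]inE; apply/negP => /setIP[].
  move=> /imsetP[C PCC ->] /imsetP[x /imsetP[C' PCC' ->] ey].
  have [e c4 _] := inPC C PCC; have [e' _ _] := inPC C' PCC'.
  have eC : C = C' by rewrite e e' ey cycleV.
  subst C'; move: ey => ey.
  have : gen C ^+ 2 = 1 by rewrite expg2 {1}ey mulVg.
  move=> /eqP; rewrite -order_dvdn => hd; have := dvdn_leq (isT : 0 < 2) hd.
  by rewrite orderE -e => h; move: (leq_trans c4 h).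
have sU : T :|: T' \subset A.
  rewrite subUset; apply/andP; split; apply/subsetP => y.
    by case/imsetP => C /inPC[e _ sCA] ->; apply: (subsetP sCA); rewrite {2}e cycle_id.
  case/imsetP => x /imsetP[C /inPC[e _ sCA] ->] ->.
  by rewrite groupV; apply: (subsetP sCA); rewrite {2}e cycle_id.
have := subset_leq_card sU; rewrite cardsU dis cards0 subn0 cT' cT.
by rewrite mul2n -addnn.
Qed.

Lemma pair_count (A : {group gT}) : 8 * #|[set p | isPair A p]| <= #|A| * #|A|.
Proof.
rewrite -sum1dep_card (partition_big (fun p => p.1) (mem (PC A))); last first.
  move=> [C Z] /= /and5P[gC gZ /eqP D cC /andP[c4 _]].
  rewrite inE gC cC c4 /=; have [_ <- _ _] := dprodP D.
  exact: (mulG_subl (Group gZ) C).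
rewrite big_distrr /=.
apply: (@leq_trans (\sum_(C in PC A) 2 * #|A|)%N).
  apply: leq_sum => C _; rewrite sum1dep_card.
  rewrite (_ : 8 = 2 * 4)%N // -mulnA leq_mul2l /=.
  apply: leq_trans (comp_count A C); rewrite leq_mul2l /=.
  apply: (leq_trans _ (leq_imset_card (fun Z => (C, Z)) _)).
  apply: subset_leq_card; apply/subsetP => [[C' Z]]; rewrite !inE /= => /andP[h /eqP eC].
  subst C'; apply/imsetP; exists Z => //; by rewrite inE.
rewrite sum_nat_const mulnA leq_mul2r; apply/orP; right.
by rewrite mulnC; apply: gen_count.
Qed.

Lemma nat_bound (A : {group gT}) :
  8 * #|quads A| <= 4 * 2 ^ (#|A| %/ 4) * (#|A| * #|A|).
Proof.
apply: (leq_trans (leq_mul (leqnn 8) (quads_le A))).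
apply: (@leq_trans (8 * \sum_(p | isPair A p) 4 * 2 ^ (#|A| %/ 4))%N).
  apply: leq_mul => //; apply: leq_sum => [[C Z]] /= /and5P[gC gZ /eqP D cC /andP[c4 _]].
  apply: leq_mul => //; rewrite leq_pexp2l // leq_divRL //.
  by rewrite -(dprod_card D) [(#|C| * _)%N]mulnC leq_mul2l c4 orbT.
have pc := pair_count A.
rewrite (_ : #|[set p | isPair A p]| = #|isPair A|) in pc; last by apply: eq_card => p; rewrite inE.
rewrite sum_nat_const mulnA mulnC; apply: leq_mul => //.
Qed.
End S.




From Stdlib Require Import Reals.
From Stdlib Require Import Lra.

Lemma INR_expn (m k : nat) : INR (expn m k) = pow (INR m) k.
Proof.
elim: k => [|k IH]; first by rewrite expn0.
by rewrite expnS mulnE mult_INR IH.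
Qed.

Theorem lemma5p3 (gT : finGroupType) (A : {group gT}) (n : nat) :
  abelian A -> #|A| = n ->
  (INR #|quads A| <= Rpower 2 (INR n / 4 + 2 * (ln (INR n) / ln 2) - 1))%R.
Proof.
move=> _ eA.
have hb := nat_bound A; rewrite eA in hb.
have n0 : (0 < n)%N by rewrite -eA cardG_gt0.
set q := #|quads A| in hb *.
set m := (n %/ 4)%N in hb.
have hm : (m * 4 <= n)%N by rewrite /m leq_trunc_div.
have hbR : (8 * INR q <= 4 * 2 ^ m * (INR n * INR n))%R.
  move/leP: hb => /le_INR.
  by rewrite !mulnE !mult_INR INR_expn [INR 8]INR_IZR_INZ [INR 4]INR_IZR_INZ [INR 2]INR_IZR_INZ.
have nR : (0 < INR n)%R by apply: lt_0_INR; apply/ltP.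
have hmR : (INR m <= INR n / 4)%R.
  move/leP: hm => /le_INR; rewrite mulnE mult_INR /= => h; lra.
set P := Rpower 2 (INR n / 4).
have hP : (2 ^ m <= P)%R.
  rewrite -Rpower_pow; last lra.
  by apply: Rle_Rpower => //; lra.
have ln2 : (0 < ln 2)%R by have := ln_lt_2; lra.
have e2 : Rpower 2 (2 * (ln (INR n) / ln 2)) = (INR n * INR n)%R.
  rewrite /Rpower (_ : 2 * (ln (INR n) / ln 2) * ln 2 = ln (INR n) + ln (INR n))%R;
    last by field; lra.
  by rewrite exp_plus exp_ln.
have e3 : Rpower 2 (-1) = (/ 2)%R by rewrite Rpower_Ropp Rpower_1 //; lra.
unfold Rminus. rewrite Rpower_plus Rpower_plus e2 e3 -/P.
have nn : (0 <= INR n * INR n)%R by apply: Rmult_le_pos; lra.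
have h4 : (4 * 2 ^ m * (INR n * INR n) <= 4 * P * (INR n * INR n))%R.
  apply: Rmult_le_compat_r => //; lra.
move: hbR h4 nn; set Y := (INR n * INR n)%R; set X := (2 ^ m)%R.
rewrite Rmult_assoc; set Z := (P * Y)%R; rewrite -Rmult_assoc -/Z.
clear; move=> h1 h2 _.
have h3 : (8 * INR q <= 4 * Z)%R.
  apply: (Rle_trans _ _ _ h1); apply: (Rle_trans _ _ _ h2); rewrite /Z; right; ring.
clearbody Z; lra.
Qed.
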